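(* Let $(X,\tau)$ be a $\mathbb{B}$-topological space. (i) For every inhabited, saturated and compact $\theta\in\mathbb{B}^X$, the map $\mathrm{sub}_X(\theta,-)\colon\tau\to\mathbb{B}$ is a Scott open $\mathbb{B}$-filter of $\tau$. (ii) For all inhabited, saturated and compact $\theta_1,\theta_2\in\mathbb{B}^X$, $$\mathrm{sub}_X(\theta_2,\theta_1)=\bigwedge_{\lambda\in\tau}\big(\mathrm{sub}_X(\theta_1,\lambda)\to\mathrm{sub}_X(\theta_2,\lambda)\big).$$ (iii) If $(X,\tau)$ is $\mathbb{B}$-sober, then for every Scott open $\mathbb{B}$-filter $F$ of $\tau$ there is a unique inhabited, saturated and compact $\theta\in\mathbb{B}^X$ such that $F(\lambda)=\mathrm{sub}_X(\theta,\lambda)$ for all $\lambda\in\tau$.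
   Context: $\mathbb{B}=\{0,1,tt,ff\}$ is the four-element Boolean algebra with bottom $0$, top $1$, and $tt,ff$ incomparable and complements of each other; $\neg$ is its complement and $a\to b=\neg a\vee b$. For a set $X$, $\mathbb{B}^X$ is the set of maps $X\to\mathbb{B}$ with pointwise order and operations; for $b\in\mathbb{B}$, $b_X$ is the constant map with value $b$; for $x\in X$, $1_x$ is the map sending $x$ to $1$ and all other points to $0$. A $\mathbb{B}$-topology on $X$ is a subset $\tau\subseteq\mathbb{B}^X$ containing all constant maps and closed under arbitrary pointwise joins and finite pointwise meets; its elements are open sets. For $\lambda,\mu\in\mathbb{B}^X$, $\mathrm{sub}_X(\lambda,\mu)=\bigwedge_{x\in X}(\lambda(x)\to\mu(x))$. The specialization $\mathbb{B}$-order is $\Omega(\tau)(x,y)=\bigwedge_{\lambda\in\tau}(\lambda(x)\to\lambda(y))$. $\theta\in\mathbb{B}^X$ is inhabited if $\bigvee_{x\in X}\theta(x)=1$; saturated if $\Omega(\tau)(x,y)\le\theta(x)\to\theta(y)$ for all $x,y\in X$; compact if for every family $\Lambda\subseteq\tau$ directed with respect to the pointwise order, $\mathrm{sub}_X(\theta,\bigvee\Lambda)=\bigvee_{\lambda\in\Lambda}\mathrm{sub}_X(\theta,\lambda)$. A $\mathbb{B}$-filter of $\tau$ is a map $F\colon\tau\to\mathbb{B}$ with $F(b_X)=b$ for all $b\in\mathbb{B}$ and $F(\lambda\wedge\mu)=F(\lambda)\wedge F(\mu)$ for all $\lambda,\mu\in\tau$; it is Scott open if moreover $F(\bigvee\Lambda)=\bigvee_{\lambda\in\Lambda}F(\lambda)$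 for every directed $\Lambda\subseteq\tau$. A $\mathbb{B}$-point of $\tau$ is a frame homomorphism $p\colon\tau\to\mathbb{B}$ (preserving finite meets and arbitrary joins) with $p(b_X)=b$ for all $b\in\mathbb{B}$. $(X,\tau)$ is $\mathbb{B}$-sober if for every $\mathbb{B}$-point $p$ of $\tau$ there is a unique $x\in X$ with $p(\lambda)=\lambda(x)$ for all $\lambda\in\tau$. *)

(* Defs.v *)
From Stdlib Require Import Classical ClassicalEpsilon FunctionalExtensionality.

Inductive B : Type := B0 | B1 | Btt | Bff.

Definition bmeet (a b : B) : B :=
  match a, b with
  | B1, x => x | x, B1 => x
  | B0, _ => B0 | _, B0 => B0
  | Btt, Btt => Btt | Bff, Bff => Bff
  | _, _ => B0
  end.

Definition bjoin (a b : B) : B :=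
  match a, b with
  | B0, x => x | x, B0 => x
  | B1, _ => B1 | _, B1 => B1
  | Btt, Btt => Btt | Bff, Bff => Bff
  | _, _ => B1
  end.

Definition bneg (a : B) : B :=
  match a with B0 => B1 | B1 => B0 | Btt => Bff | Bff => Btt end.

Definition bimp (a b : B) : B := bjoin (bneg a) b.

Definition ble (a b : B) : Prop := bmeet a b = a.

Definition bJoin (S : B -> Prop) : B :=
  if excluded_middle_informative (S B1 \/ (S Btt /\ S Bff)) then B1
  else if excluded_middle_informative (S Btt) then Btt
  else if excluded_middle_informative (S Bff) then Bff
  else B0.

Definition bMeet (S : B -> Prop) : B := bneg (bJoin (fun b => S (bneg b))).

Section BX.
Variable X : Type.

Definition BX := X -> B.

Definition constX (b : B) : BX := fun _ => b.

Definition leX (l m : BX) : Prop := forall x, ble (l x) (m x).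
Definition meetX (l m : BX) : BX := fun x => bmeet (l x) (m x).
Definition JoinX (L : BX -> Prop) : BX :=
  fun x => bJoin (fun b => exists l, L l /\ b = l x).

Definition is_Btopology (tau : BX -> Prop) : Prop :=
  (forall b, tau (constX b)) /\
  (forall L : BX -> Prop, (forall l, L l -> tau l) -> tau (JoinX L)) /\
  (forall l m, tau l -> tau m -> tau (meetX l m)).

Definition subX (l m : BX) : B := bMeet (fun b => exists x, b = bimp (l x) (m x)).

Definition Omega (tau : BX -> Prop) (x y : X) : B :=
  bMeet (fun b => exists l, tau l /\ b = bimp (l x) (l y)).

Definition directed (tau : BX -> Prop) (L : BX -> Prop) : Prop :=
  (forall l, L l -> tau l) /\ (exists l, L l) /\
  (forall l m, L l -> L m -> exists n, L n /\ leX l n /\ leX m n).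

Definition inhabited (th : BX) : Prop := bJoin (fun b => exists x, b = th x) = B1.

Definition saturated (tau : BX -> Prop) (th : BX) : Prop :=
  forall x y, ble (Omega tau x y) (bimp (th x) (th y)).

Definition compact (tau : BX -> Prop) (th : BX) : Prop :=
  forall L, directed tau L ->
    subX th (JoinX L) = bJoin (fun b => exists l, L l /\ b = subX th l).

(* B-filter and Scott open B-filter of tau (only values on tau matter) *)
Definition Bfilter (tau : BX -> Prop) (F : BX -> B) : Prop :=
  (forall b, F (constX b) = b) /\
  (forall l m, tau l -> tau m -> F (meetX l m) = bmeet (F l) (F m)).

Definition scott_open_Bfilter (tau : BX -> Prop) (F : BX -> B) : Prop :=
  Bfilter tau F /\
  (forall L, directed tau L -> F (JoinX L) = bJoin (fun b => exists l, L l /\ b = F l)).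

Definition Bpoint (tau : BX -> Prop) (p : BX -> B) : Prop :=
  (forall b, p (constX b) = b) /\
  (forall l m, tau l -> tau m -> p (meetX l m) = bmeet (p l) (p m)) /\
  (forall L, (forall l, L l -> tau l) -> p (JoinX L) = bJoin (fun b => exists l, L l /\ b = p l)).

Definition Bsober (tau : BX -> Prop) : Prop :=
  forall p, Bpoint tau p -> exists! x : X, forall l, tau l -> p l = l x.

End BX.

Arguments constX {X}.
Arguments leX {X}.
Arguments meetX {X}.
Arguments JoinX {X}.
Arguments is_Btopology {X}.
Arguments subX {X}.
Arguments Omega {X}.
Arguments directed {X}.
Arguments inhabited {X}.
Arguments saturated {X}.
Arguments compact {X}.
Arguments Bfilter {X}.
Arguments scott_open_Bfilter {X}.
Arguments Bpoint {X}.
Arguments Bsober {X}.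

(* Main.v *)
Require Import Defs.
From Stdlib Require Import Classical ClassicalEpsilon FunctionalExtensionality.
From mathcomp Require ssreflect ssrfun ssrbool boolp classical_sets.
Module ZornW.
Import ssreflect ssrfun ssrbool boolp classical_sets.
Local Open Scope classical_set_scope.
Lemma my_zorn (T:Type) (P : (T->Prop)->Prop) :
  (forall F : (T->Prop)->Prop, (forall S, F S -> P S) ->
     (forall S1 S2, F S1 -> F S2 -> (forall x, S1 x -> S2 x) \/ (forall x, S2 x -> S1 x)) ->
     P (fun x => exists S, F S /\ S x)) ->
  exists A, P A /\ forall B', (forall x, A x -> B' x) -> ~(forall x, B' x -> A x) -> ~ P B'.
Proof.
move=> H.
have HZ : (forall F : set (set T), F `<=` P -> total_on F subset ->
      P (\bigcup_(X in F) X)).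
  move=> F FP Ftot.
  have -> : (\bigcup_(X in F) X) = (fun x => exists S, F S /\ S x).
    by apply/funext=> x; apply/propext; split=> [[S FS Sx]|[S [FS Sx]]]; [exists S|exists S].
  by apply: H.
have [A [PA Amax]] := Zorn_bigcup HZ.
exists A; split=> // B' AB nBA PB; apply: (Amax B') => //; split=> //.
Qed.
End ZornW.

Definition c (i : bool) (b : B) : Prop :=
  match i, b with
  | _, B1 => True | true, Btt => True | false, Bff => True | _, _ => False end.
Definition e (i : bool) : B := if i then Btt else Bff.

Ltac bcase := repeat match goal with
  | i : bool |- _ => destruct i
  | b : B |- _ => destruct b end; simpl in *; try tauto.

Lemma B_ext a b : (forall i, c i a <-> c i b) -> a = b.
Proof. intros H; pose proof (H true); pose proof (H false); bcase. Qed.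
Lemma c_meet i a b : c i (bmeet a b) <-> c i a /\ c i b.
Proof. bcase. Qed.
Lemma c_join i a b : c i (bjoin a b) <-> c i a \/ c i b.
Proof. bcase. Qed.
Lemma c_neg i a : c i (bneg a) <-> ~ c i a.
Proof. bcase. Qed.
Lemma c_imp i a b : c i (bimp a b) <-> (c i a -> c i b).
Proof. unfold bimp. rewrite c_join, c_neg. destruct (classic (c i a)); tauto. Qed.
Lemma c_e i k : c i (e k) <-> i = k.
Proof. destruct i, k; simpl; split; intros H; first [reflexivity|exact I|discriminate|contradiction]. Qed.
Lemma c_B0 i : ~ c i B0. Proof. bcase. Qed.
Lemma c_B1 i : c i B1. Proof. bcase. Qed.
Lemma ble_c a b : ble a b <-> forall i, c i a -> c i b.
Proof. unfold ble; split.
- intros H i; rewrite <- H, c_meet; tauto.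
- intros H; apply B_ext; intro i; rewrite c_meet; specialize (H i); tauto. Qed.

Lemma c_bJoin i S : c i (bJoin S) <-> exists b, S b /\ c i b.
Proof.
  unfold bJoin.
  destruct (excluded_middle_informative _) as [H|H].
  { split; [intros _|intros; apply c_B1]. destruct H as [H|[H1 H2]].
    - exists B1; split; [exact H| apply c_B1].
    - destruct i; [exists Btt|exists Bff]; simpl; tauto. }
  destruct (excluded_middle_informative _) as [H1|H1].
  { split.
    - intros Hc; exists Btt; split; auto.
    - intros [b [Hb Hc]]; destruct b; bcase; firstorder. }
  destruct (excluded_middle_informative _) as [H2|H2].
  { split.
    - intros Hc; exists Bff; split; auto.
    - intros [b [Hb Hc]]; destruct b; bcase; firstorder. }
  split; [intros Hc; bcase|]. intros [b [Hb Hc]]; destruct b; bcase; firstorder.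
Qed.

Lemma c_bMeet i S : c i (bMeet S) <-> forall b, S b -> c i b.
Proof.
  unfold bMeet; rewrite c_neg, c_bJoin; split.
  - intros H b Hb; apply NNPP; intro Hn; apply H; exists (bneg b).
    rewrite c_neg; destruct b; simpl in *; auto.
  - intros H [b [Hb Hc]]; apply H in Hb; rewrite c_neg in Hb; auto.
Qed.

Definition mk (f : bool -> Prop) : B :=
  if excluded_middle_informative (f true) then
    (if excluded_middle_informative (f false) then B1 else Btt)
  else (if excluded_middle_informative (f false) then Bff else B0).
Lemma c_mk i f : c i (mk f) <-> f i.
Proof. unfold mk; repeat destruct (excluded_middle_informative _); destruct i; simpl; tauto. Qed.

Section S.
Variable X : Type.
Implicit Types l m th : X -> B.

Lemma c_subX i l m : c i (subX l m) <-> forall x, c i (l x) -> c i (m x).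
Proof. unfold subX; rewrite c_bMeet; split.
- intros H x; rewrite <- c_imp; apply H; eauto.
- intros H b [x ->]; rewrite c_imp; auto. Qed.
Lemma c_JoinX i (L : (X -> B) -> Prop) x : c i (JoinX L x) <-> exists l, L l /\ c i (l x).
Proof. unfold JoinX; rewrite c_bJoin; split.
- intros [b [[l [Hl ->]] Hc]]; eauto.
- intros [l [Hl Hc]]; eauto. Qed.
Lemma c_Omega i tau x y : c i (Omega tau x y) <-> forall l, tau l -> c i (l x) -> c i (l y).
Proof. unfold Omega; rewrite c_bMeet; split.
- intros H l Hl; rewrite <- c_imp; apply H; eauto.
- intros H b [l [Hl ->]]; rewrite c_imp; auto. Qed.
Lemma inhabited_c th : inhabited th <-> forall i, exists x, c i (th x).
Proof. unfold inhabited; split.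
- intros H i; pose proof (c_B1 i) as H1; rewrite <- H, c_bJoin in H1.
  destruct H1 as [b [[x ->] Hc]]; eauto.
- intros H; apply B_ext; intro i; rewrite c_bJoin; split; [intros; apply c_B1|].
  intros _; destruct (H i) as [x Hx]; eauto. Qed.
Lemma leX_c l m : leX l m <-> forall i x, c i (l x) -> c i (m x).
Proof. unfold leX; split.
- intros H i x; apply (proj1 (ble_c _ _) (H x)).
- intros H x; rewrite ble_c; auto. Qed.
Lemma funB_ext l m : (forall i x, c i (l x) <-> c i (m x)) -> l = m.
Proof. intros H; apply functional_extensionality; intro x; apply B_ext; auto. Qed.
Lemma bJoin_ext (S S' : B -> Prop) : (forall b, S b <-> S' b) -> bJoin S = bJoin S'.
Proof. intros H; apply B_ext; intro i; rewrite !c_bJoin; firstorder. Qed.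

End S.

Section Main.
Variable X : Type.
Variable tau : (X -> B) -> Prop.
Hypothesis Htau : is_Btopology tau.
Implicit Types l m th : X -> B.

Lemma tau_const b : tau (constX b). Proof. apply (proj1 Htau). Qed.
Lemma tau_Join L : (forall l, L l -> tau l) -> tau (JoinX L). Proof. apply (proj1 (proj2 Htau)). Qed.
Lemma tau_meet l m : tau l -> tau m -> tau (meetX l m). Proof. apply (proj2 (proj2 Htau)). Qed.

Lemma part1 th : inhabited th -> compact tau th -> scott_open_Bfilter tau (fun l => subX th l).
Proof.
  intros Hi Hc; split; [split|].
  - intros b; apply B_ext; intro i; rewrite c_subX; unfold constX; split.
    + intros H; rewrite inhabited_c in Hi; destruct (Hi i) as [x Hx]; eauto.
    + intros H x _; exact H.
  - intros l m _ _; apply B_ext; intro i; rewrite c_meet, !c_subX; unfold meetX.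
    split.
    + intros H; split; intros x Hx; specialize (H x Hx); rewrite c_meet in H; tauto.
    + intros [H1 H2] x Hx; rewrite c_meet; auto.
  - intros L HL; apply (Hc L HL).
Qed.

Lemma ii_comp th1 th2 i : saturated tau th1 ->
  (forall l, tau l -> (forall x, c i (th1 x) -> c i (l x)) -> (forall x, c i (th2 x) -> c i (l x))) ->
  forall y, c i (th2 y) -> c i (th1 y).
Proof.
  intros Hs H y Hy; apply NNPP; intro Hn.
  set (L := fun m => tau m /\ ~ c i (m y)).
  assert (Ht : tau (JoinX L)) by (apply tau_Join; intros l [Hl _]; exact Hl).
  assert (H1 : forall x, c i (th1 x) -> c i (JoinX L x)).
  { intros x Hx; rewrite c_JoinX; apply NNPP; intro Hno.
    pose proof (proj1 (ble_c _ _) (Hs x y) i) as Hsi.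
    rewrite c_Omega, c_imp in Hsi. apply Hn, Hsi; auto.
    intros l Hl Hlx; apply NNPP; intro Hly; apply Hno; exists l; split; [split|]; auto. }
  specialize (H (JoinX L) Ht H1 y Hy). rewrite c_JoinX in H.
  destruct H as [l [[_ Hl] Hc]]; auto.
Qed.

Lemma part2 th1 th2 : saturated tau th1 ->
  subX th2 th1 = bMeet (fun b => exists l, tau l /\ b = bimp (subX th1 l) (subX th2 l)).
Proof.
  intros Hs; apply B_ext; intro i; rewrite c_subX, c_bMeet; split.
  - intros H b [l [Hl ->]]; rewrite c_imp, !c_subX; intros H1 x Hx; auto.
  - intros H; apply (ii_comp th1 th2 i Hs).
    intros l Hl; rewrite <- !c_subX, <- c_imp; apply H; eauto.
Qed.

Section P3.
Variable F : (X -> B) -> B.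
Hypothesis HF : scott_open_Bfilter tau F.

Lemma Fconst b : F (constX b) = b. Proof. apply (proj1 (proj1 HF)). Qed.
Lemma Fmeet l m : tau l -> tau m -> F (meetX l m) = bmeet (F l) (F m).
Proof. apply (proj2 (proj1 HF)). Qed.

Lemma Fmono i l m : tau l -> tau m -> leX l m -> c i (F l) -> c i (F m).
Proof.
  intros Hl Hm Hle H.
  assert (E : meetX l m = l).
  { apply funB_ext; intros k x; unfold meetX; rewrite c_meet.
    rewrite leX_c in Hle; specialize (Hle k x); tauto. }
  rewrite <- E, Fmeet in H by auto. rewrite c_meet in H; tauto.
Qed.

Lemma Fproj i l : tau l -> (c i (F (meetX l (constX (e i)))) <-> c i (F l)).
Proof.
  intros Hl; rewrite Fmeet, Fconst, c_meet, c_e by (auto using tau_const); tauto.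
Qed.

Lemma proj_eq i l m : (forall x, c i (l x) -> c i (m x)) ->
  leX (meetX l (constX (e i))) (meetX m (constX (e i))).
Proof.
  intros H; apply leX_c; intros k x; unfold meetX, constX; rewrite !c_meet, !c_e.
  intros [H1 ->]; auto.
Qed.

Lemma Fmono_i i l m : tau l -> tau m -> (forall x, c i (l x) -> c i (m x)) ->
  c i (F l) -> c i (F m).
Proof.
  intros Hl Hm H Hc. rewrite <- Fproj in Hc |- * by auto.
  apply (Fmono i _ _ (tau_meet _ _ Hl (tau_const _)) (tau_meet _ _ Hm (tau_const _))
           (proj_eq i l m H) Hc).
Qed.

Lemma Findep i l m : tau l -> tau m -> (forall x, c i (l x) <-> c i (m x)) ->
  (c i (F l) <-> c i (F m)).
Proof.
  intros Hl Hm H; split; apply Fmono_i; auto; intros x; apply H.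
Qed.

Definition th0 : X -> B := fun x => bMeet (fun b => exists l, tau l /\ b = bimp (F l) (l x)).

Lemma c_th0 i x : c i (th0 x) <-> forall l, tau l -> c i (F l) -> c i (l x).
Proof.
  unfold th0; rewrite c_bMeet; split.
  - intros H l Hl; rewrite <- c_imp; apply H; eauto.
  - intros H b [l [Hl ->]]; rewrite c_imp; auto.
Qed.

Lemma X_inh : exists x : X, True.
Proof.
  apply NNPP; intro Hn.
  assert (E : constX (X:=X) B0 = constX B1).
  { apply functional_extensionality; intro x; exfalso; apply Hn; eauto. }
  pose proof (Fconst B0) as H0; rewrite E, Fconst in H0; discriminate.
Qed.

Lemma leX_from_i i l m : (forall x, ~ c (negb i) (l x)) ->
  (forall x, c i (l x) -> c i (m x)) -> leX l m.
Proof.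
  intros Hj H; apply leX_c; intros k x Hk.
  destruct (Bool.bool_dec k i) as [->|Hne]; auto.
  exfalso; apply (Hj x); destruct k, i; simpl in *; congruence || exact Hk.
Qed.

Lemma HM (Hsob : Bsober tau) i U : tau U -> (forall x, c i (th0 x) -> c i (U x)) -> c i (F U).
Proof.
  intros HU HK; apply NNPP; intro HnU.
  set (Pz := fun S : X -> Prop => exists W, tau W /\ (forall x, (S x \/ c i (U x)) <-> c i (W x)) /\ ~ c i (F W)).
  assert (Zp : forall Fam : (X -> Prop) -> Prop, (forall S, Fam S -> Pz S) ->
     (forall S1 S2, Fam S1 -> Fam S2 -> (forall x, S1 x -> S2 x) \/ (forall x, S2 x -> S1 x)) ->
     Pz (fun x => exists S, Fam S /\ S x)).
  { intros Fam FP Ftot.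
    set (L := fun W' => tau W' /\ (forall x, ~ c (negb i) (W' x)) /\
       ((forall x, c i (W' x) <-> c i (U x)) \/
        exists S, Fam S /\ forall x, c i (W' x) <-> (S x \/ c i (U x)))).
    assert (HjE : forall (W : X -> B) x, ~ c (negb i) (meetX W (constX (e i)) x)).
    { intros W x; unfold meetX, constX; rewrite c_meet, c_e; destruct i; simpl; intros [_ H]; discriminate. }
    assert (HiE : forall (W : X -> B) x, c i (meetX W (constX (e i)) x) <-> c i (W x)).
    { intros W x; unfold meetX, constX; rewrite c_meet, c_e; tauto. }
    assert (LU : L (meetX U (constX (e i)))).
    { split; [apply tau_meet; auto; apply tau_const|]. split; auto. }
    assert (Ltau : forall l, L l -> tau l) by (intros l [H _]; exact H).
    assert (LnF : forall W', L W' -> ~ c i (F W')).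
    { intros W' [HW' [_ [H|[S [HS H]]]]].
      - rewrite (Findep i W' U HW' HU H); auto.
      - destruct (FP S HS) as [W [HW [HWc HWF]]].
        rewrite (Findep i W' W HW' HW); auto.
        intros x; rewrite H; apply HWc. }
    assert (Ldir : directed tau L).
    { split; [exact Ltau|]. split; [eauto|].
      assert (Tot : forall l m, L l -> L m -> leX l m \/ leX m l).
      { intros l m [Hl [Hlj Hl']] [Hm [Hmj Hm']].
        destruct Hl' as [Hl'|[S1 [HS1 Hl']]]; destruct Hm' as [Hm'|[S2 [HS2 Hm']]].
        - left; apply (leX_from_i i); auto; intros x; rewrite Hl', Hm'; auto.
        - left; apply (leX_from_i i); auto; intros x; rewrite Hl', Hm'; auto.
        - right; apply (leX_from_i i); auto; intros x; rewrite Hl', Hm'; auto.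
        - destruct (Ftot S1 S2 HS1 HS2) as [H|H].
          + left; apply (leX_from_i i); auto; intros x; rewrite Hl', Hm'; intuition.
          + right; apply (leX_from_i i); auto; intros x; rewrite Hl', Hm'; intuition. }
      intros l m Hl Hm; destruct (Tot l m Hl Hm) as [H|H].
      - exists m; split; auto; split; auto; apply leX_c; auto.
      - exists l; split; auto; split; auto; apply leX_c; auto. }
    exists (JoinX L); split; [apply tau_Join; exact Ltau|]; split.
    - intros x; rewrite c_JoinX; split.
      + intros [[S [HS HSx]]|HUx].
        * destruct (FP S HS) as [W [HW [HWc HWF]]].
          exists (meetX W (constX (e i))); split.
          -- split; [apply tau_meet; auto; apply tau_const|]. split; auto.
             right; exists S; split; auto; intros y; rewrite HiE; symmetry; apply HWc.
          -- rewrite HiE; apply HWc; auto.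
        * exists (meetX U (constX (e i))); split; auto; rewrite HiE; auto.
      + intros [W' [[_ [_ [H|[S [HS H]]]]] Hc]]; rewrite H in Hc; auto.
        destruct Hc as [Hc|Hc]; eauto.
    - rewrite (proj2 HF L Ldir), c_bJoin. intros [b [[l [Hl ->]] Hc]]. apply (LnF l Hl Hc). }
  destruct (ZornW.my_zorn X Pz Zp) as [A [[V [HV [HVc HVF]]] Amax]].
  assert (Max : forall W, tau W -> (forall x, c i (V x) -> c i (W x)) ->
     (exists x, c i (W x) /\ ~ c i (V x)) -> c i (F W)).
  { intros W HW HVW [x1 [Hx1 Hnx1]]; apply NNPP; intro HWF.
    apply (Amax (fun x => c i (W x))).
    - intros x Hx; apply HVW, HVc; auto.
    - intros H; apply Hnx1, HVc; left; auto.
    - exists W; split; auto; split; auto. intros x; split; [|auto].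
      intros [H|H]; auto. apply HVW, HVc; auto. }
  destruct (X_inh) as [x0 _].
  set (p := fun W => mk (fun k => (k = i /\ ~ (forall x, c i (W x) -> c i (V x))) \/
                                   (k <> i /\ c k (W x0)))).
  assert (Hp : Bpoint tau p).
  { split; [|split].
    - intros b; apply B_ext; intro k; unfold p; rewrite c_mk; unfold constX.
      destruct (Bool.bool_dec k i) as [->|Hne].
      + split.
        * intros [[_ H]|[H _]]; [|congruence]. apply NNPP; intro Hb; apply H; intros; contradiction.
        * intros Hb; left; split; auto. intros Hall.
          apply HVF, (Fmono_i i (constX b) V); auto using tau_const.
          rewrite Fconst; auto.
      + split; [intros [[H _]|[_ H]]; [congruence|auto]|]. intros; right; auto.
    - intros l m Hl Hm; apply B_ext; intro k; unfold p; rewrite c_meet, !c_mk; unfold meetX.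
      destruct (Bool.bool_dec k i) as [->|Hne].
      + split.
        * intros [[_ H]|[H _]]; [|congruence]. split; left; split; auto; intro H1; apply H;
          intros x Hx; rewrite c_meet in Hx; apply H1; tauto.
        * intros [[[_ H1]|[H _]] [[_ H2]|[H' _]]]; try congruence.
          left; split; auto; intros Hlm.
          set (V1 := JoinX (fun w => w = V \/ w = l)).
          set (V2 := JoinX (fun w => w = V \/ w = m)).
          assert (HV1 : tau V1) by (apply tau_Join; intros w [->| ->]; auto).
          assert (HV2 : tau V2) by (apply tau_Join; intros w [->| ->]; auto).
          assert (cV1 : forall x, c i (V1 x) <-> c i (V x) \/ c i (l x)).
          { intros x; unfold V1; rewrite c_JoinX; split.
            - intros [w [[->| ->] Hw]]; auto.
            - intros [H|H]; eauto. }
          assert (cV2 : forall x, c i (V2 x) <-> c i (V x) \/ c i (m x)).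
          { intros x; unfold V2; rewrite c_JoinX; split.
            - intros [w [[->| ->] Hw]]; auto.
            - intros [H|H]; eauto. }
          assert (F1 : c i (F V1)).
          { apply Max; auto. intros x Hx; apply cV1; auto.
            apply NNPP; intro Hn; apply H1; intros x Hx; apply NNPP; intro Hnx; apply Hn;
            exists x; rewrite cV1; auto. }
          assert (F2 : c i (F V2)).
          { apply Max; auto. intros x Hx; apply cV2; auto.
            apply NNPP; intro Hn; apply H2; intros x Hx; apply NNPP; intro Hnx; apply Hn;
            exists x; rewrite cV2; auto. }
          apply HVF, (Fmono_i i (meetX V1 V2) V); auto using tau_meet.
          { intros x; unfold meetX; rewrite c_meet, cV1, cV2; intros [[A1|A1] [A2|A2]]; auto.
            apply Hlm; rewrite c_meet; auto. }
          rewrite Fmeet, c_meet; auto.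
      + rewrite c_meet; split.
        * intros [[H _]|[_ H]]; [congruence|]. split; right; split; tauto.
        * intros [[[H _]|[_ H1]] [[H' _]|[_ H2]]]; try congruence. right; split; auto; rewrite c_meet; auto.
    - intros L HL; apply B_ext; intro k; unfold p; rewrite c_mk, c_bJoin.
      destruct (Bool.bool_dec k i) as [->|Hne].
      + split.
        * intros [[_ H]|[H _]]; [|congruence].
          apply NNPP; intro Hn; apply H; intros x Hx; rewrite c_JoinX in Hx.
          destruct Hx as [l [Hl Hlx]]. apply NNPP; intro Hv; apply Hn.
          exists (p l); split; [exists l; split; auto|]. unfold p; rewrite c_mk.
          left; split; auto; intro Hall; auto.
        * intros [b [[l [Hl ->]] Hc]]; unfold p in Hc; rewrite c_mk in Hc.
          destruct Hc as [[_ Hc]|[Hc _]]; [|congruence].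
          left; split; auto; intro Hall; apply Hc; intros x Hx; apply Hall; rewrite c_JoinX; eauto.
      + rewrite c_JoinX; split.
        * intros [[H _]|[_ [l [Hl Hc]]]]; [congruence|].
          exists (p l); split; [eauto|]. unfold p; rewrite c_mk; right; auto.
        * intros [b [[l [Hl ->]] Hc]]; unfold p in Hc; rewrite c_mk in Hc.
          destruct Hc as [[Hc _]|[_ Hc]]; [congruence|]. right; split; eauto. }
  destruct (Hsob p Hp) as [x [Hx _]].
  assert (Hpx : forall l, tau l -> (c i (l x) <-> ~ (forall y, c i (l y) -> c i (V y)))).
  { intros l Hl; rewrite <- (Hx l Hl); unfold p; rewrite c_mk; split.
    - intros [[_ H]|[H _]]; [auto|congruence].
    - intros H; left; auto. }
  assert (Hth : c i (th0 x)).
  { apply c_th0; intros l Hl Hc; apply Hpx; auto; intros Hall.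
    apply HVF, (Fmono_i i l V); auto. }
  apply HK in Hth. assert (HVx : c i (V x)) by (apply HVc; auto).
  rewrite Hpx in HVx by auto. apply HVx; auto.
Qed.

End P3.
End Main.

Theorem mainTheorem1 (X : Type) (tau : (X -> B) -> Prop) (Htau : is_Btopology tau) :
  (* (i) *)
  (forall th : X -> B, inhabited th -> saturated tau th -> compact tau th ->
     scott_open_Bfilter tau (fun l => subX th l)) /\
  (* (ii) *)
  (forall th1 th2 : X -> B,
     inhabited th1 -> saturated tau th1 -> compact tau th1 ->
     inhabited th2 -> saturated tau th2 -> compact tau th2 ->
     subX th2 th1 =
       bMeet (fun b => exists l, tau l /\ b = bimp (subX th1 l) (subX th2 l))) /\
  (* (iii) *)
  (Bsober tau ->
     forall F : (X -> B) -> B, scott_open_Bfilter tau F ->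
       exists! th : X -> B,
         inhabited th /\ saturated tau th /\ compact tau th /\
         (forall l, tau l -> F l = subX th l)).
Proof.
  split; [intros th Hi _ Hc; apply part1; auto|].
  split; [intros th1 th2 _ Hs _ _ _ _; apply part2; auto|].
  intros Hsob F HF.
  set (t := th0 X tau F).
  assert (Key : forall i l, tau l -> (c i (F l) <-> forall x, c i (t x) -> c i (l x))).
  { intros i l Hl; split.
    - intros H x Hx; apply (proj1 (c_th0 X tau F i x) Hx l Hl H).
    - apply (HM X tau Htau F HF Hsob i l Hl). }
  assert (Fsub : forall l, tau l -> F l = subX t l).
  { intros l Hl; apply B_ext; intro i; rewrite c_subX; apply Key; auto. }
  assert (Sat : saturated tau t).
  { intros x y; apply ble_c; intro i; rewrite c_Omega, c_imp; intros HO Hx.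
    unfold t in *; rewrite c_th0 in Hx |- *. intros l Hl Hc; apply HO; auto. }
  exists t; split.
  - split; [|split; [exact Sat|split; [|exact Fsub]]].
    + apply inhabited_c; intro i; apply NNPP; intro Hn.
      assert (H : c i (F (constX B0))).
      { apply Key; [apply tau_const; auto|]. intros x Hx; exfalso; apply Hn; eauto. }
      rewrite (Fconst _ tau F HF) in H. apply (c_B0 i H).
    + intros L HL. rewrite <- Fsub by (apply tau_Join; auto; apply (proj1 HL)).
      rewrite (proj2 HF L HL). apply bJoin_ext; intro b; split.
      * intros [l [Hl ->]]; exists l; split; auto; apply Fsub, (proj1 HL); auto.
      * intros [l [Hl ->]]; exists l; split; auto; symmetry; apply Fsub, (proj1 HL); auto.
  - intros t' [Hi' [Hs' [Hc' Hf']]].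
    apply funB_ext; intros i x; split.
    + apply (ii_comp X tau Htau t' t i Hs').
      intros l Hl H1; rewrite <- c_subX, <- Fsub, Hf', c_subX by auto; exact H1.
    + apply (ii_comp X tau Htau t t' i Sat).
      intros l Hl H1; rewrite <- c_subX, <- Hf', Fsub, c_subX by auto; exact H1.
Qed.
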